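(* Let $(X,T)$ be a compact Hausdorff flow such that every point of $X$ is almost automorphic. Then the enveloping semigroup $\mathcal E(X,T)$ is a group, and the group inversion $g\mapsto g^{-1}$ is a continuous map from $\mathcal E(X,T)$ onto $\mathcal E(X,T)$ with respect to the product topology on $X^X$.
   Context: $X$ compact Hausdorff, $T$ a topological group acting continuously on $X$. A point $x$ is almost automorphic if for every net $\{t_i\}\subset T$ with $t_ix\to y$ it holds that $t_i^{-1}y\to x$. The enveloping semigroup $\mathcal E(X,T)$ is the closure of $T$ in $X^X$ with the product topology, with composition as operation. *)

(* Defs.v *)
From Stdlib Require Import List Classical FunctionalExtensionality.
Import ListNotations.
Set Implicit Arguments.

Record Topology (X : Type) := {
  is_open : (X -> Prop) -> Prop;
  open_full : is_open (fun _ => True);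
  open_inter : forall U V, is_open U -> is_open V -> is_open (fun x => U x /\ V x);
  open_union : forall F : (X -> Prop) -> Prop,
      (forall U, F U -> is_open U) -> is_open (fun x => exists U, F U /\ U x)
}.
Arguments is_open {X} t U.

Definition compact {X} (t : Topology X) : Prop :=
  forall F : (X -> Prop) -> Prop,
    (forall U, F U -> is_open t U) ->
    (forall x, exists U, F U /\ U x) ->
    exists l : list (X -> Prop),
      (forall U, In U l -> F U) /\ (forall x, exists U, In U l /\ U x).

Definition hausdorff {X} (t : Topology X) : Prop :=
  forall x y, x <> y ->
    exists U V, is_open t U /\ is_open t V /\ U x /\ V y /\
                forall z, ~ (U z /\ V z).

Definition continuous {A B} (tA : Topology A) (tB : Topology B) (f : A -> B) : Prop :=
  forall a W, is_open tB W -> W (f a) ->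
    exists U, is_open tA U /\ U a /\ forall a', U a' -> W (f a').

Definition jointly_continuous {A B C} (tA : Topology A) (tB : Topology B)
    (tC : Topology C) (f : A -> B -> C) : Prop :=
  forall a b W, is_open tC W -> W (f a b) ->
    exists U V, is_open tA U /\ is_open tB V /\ U a /\ V b /\
      forall a' b', U a' -> V b' -> W (f a' b').

Record TopGroup := {
  carrier :> Type;
  gmul : carrier -> carrier -> carrier;
  ginv : carrier -> carrier;
  gone : carrier;
  gmulA : forall a b c, gmul a (gmul b c) = gmul (gmul a b) c;
  gmul1l : forall a, gmul gone a = a;
  gmul1r : forall a, gmul a gone = a;
  gmulVl : forall a, gmul (ginv a) a = gone;
  gmulVr : forall a, gmul a (ginv a) = gone;
  gtop : Topology carrier;
  gmul_cont : jointly_continuous gtop gtop gtop gmul;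
  ginv_cont : continuous gtop gtop ginv
}.

Definition continuous_action (T : TopGroup) {X} (tX : Topology X)
    (act : T -> X -> X) : Prop :=
  (forall x, act (gone T) x = x) /\
  (forall g h x, act (gmul T g h) x = act g (act h x)) /\
  jointly_continuous (gtop T) tX tX act.

Definition directed {D : Type} (le : D -> D -> Prop) : Prop :=
  inhabited D /\
  (forall i, le i i) /\
  (forall i j k, le i j -> le j k -> le i k) /\
  (forall i j, exists k, le i k /\ le j k).

Definition net_converges {D X} (le : D -> D -> Prop) (tX : Topology X)
    (s : D -> X) (y : X) : Prop :=
  forall U, is_open tX U -> U y ->
    exists i0, forall i, le i0 i -> U (s i).

Definition almost_automorphic (T : TopGroup) {X} (tX : Topology X)
    (act : T -> X -> X) (x : X) : Prop :=
  forall (D : Type) (le : D -> D -> Prop) (t : D -> T) (y : X),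
    directed le ->
    net_converges le tX (fun i => act (t i) x) y ->
    net_converges le tX (fun i => act (ginv T (t i)) y) x.

(** Product (pointwise-convergence) topology on X^X = X -> X:
    W is open iff around each of its points it contains a basic open set
    { g | g x_k \in U_k for k = 1..n } with the U_k open. *)
Definition pw_open {X} (tX : Topology X) (W : (X -> X) -> Prop) : Prop :=
  forall f, W f ->
    exists l : list (X * (X -> Prop)),
      (forall xu, In xu l -> is_open tX (snd xu) /\ snd xu (f (fst xu))) /\
      (forall g, (forall xu, In xu l -> snd xu (g (fst xu))) -> W g).

Definition pw_closure {X} (tX : Topology X) (S : (X -> X) -> Prop) (f : X -> X) : Prop :=
  forall W, pw_open tX W -> W f -> exists g, S g /\ W g.

Definition enveloping (T : TopGroup) {X} (tX : Topology X) (act : T -> X -> X)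
    : (X -> X) -> Prop :=
  pw_closure tX (fun p => exists g : T, forall x, p x = act g x).

(* Main.v *)
Require Import Defs.
From Stdlib Require Import List Classical FunctionalExtensionality ClassicalEpsilon.
Import ListNotations.

Definition basic {X} (l : list (X * (X -> Prop))) (g : X -> X) : Prop :=
  forall xu, In xu l -> snd xu (g (fst xu)).
Definition nbl {X} (tX : Topology X) (l : list (X * (X -> Prop))) (p : X -> X) : Prop :=
  forall xu, In xu l -> is_open tX (snd xu) /\ snd xu (p (fst xu)).

Lemma basic_open {X} (tX : Topology X) l :
  (forall xu, In xu l -> is_open tX (snd xu)) -> pw_open tX (basic l).
Proof.
  intros H f Hf. exists l. split; [|auto].
  intros xu Hin. split; auto.
Qed.

Lemma E_basic (T : TopGroup) {X} (tX : Topology X) act p l :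
  enveloping T tX act p -> nbl tX l p -> exists g, basic l (act g).
Proof.
  intros HE Hl.
  destruct (HE (basic l)) as [g' [[g Hg] Hb]].
  - apply basic_open. intros xu H; apply (Hl xu H).
  - intros xu H; apply (Hl xu H).
  - exists g. intros xu H. rewrite <- Hg. apply Hb; auto.
Qed.

Lemma eventually_and {D} (le : D -> D -> Prop) (P Q : D -> Prop) :
  directed le -> (exists i0, forall i, le i0 i -> P i) -> (exists i0, forall i, le i0 i -> Q i) ->
  exists i0, forall i, le i0 i -> P i /\ Q i.
Proof.
  intros [_ [_ [Htr Hub]]] [a Ha] [b Hb].
  destruct (Hub a b) as [k [Hak Hbk]].
  exists k. intros i Hi. split; [apply Ha | apply Hb]; eapply Htr; eauto.
Qed.

Lemma eventually_list {D} (le : D -> D -> Prop) {A} (l : list A) (P : A -> D -> Prop) :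
  directed le -> (forall a, In a l -> exists i0, forall i, le i0 i -> P a i) ->
  exists i0, forall i, le i0 i -> forall a, In a l -> P a i.
Proof.
  intros Hd. induction l as [|a l IH]; intros H.
  - destruct Hd as [[i0] _]. exists i0. intros i _ a [].
  - assert (H1 : exists i0, forall i, le i0 i -> P a i) by (apply H; simpl; auto).
    assert (H2 : exists i0, forall i, le i0 i -> forall b, In b l -> P b i).
    { apply IH. intros b Hb. apply H; simpl; auto. }
    destruct (eventually_and le _ _ Hd H1 H2) as [k Hk].
    exists k. intros i Hi b [<-|Hb]; apply Hk in Hi as [Ha Hb']; auto.
Qed.

Lemma limit_unique {D X} (le : D -> D -> Prop) (tX : Topology X) s y1 y2 :
  hausdorff tX -> directed le -> net_converges le tX s y1 -> net_converges le tX s y2 -> y1 = y2.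
Proof.
  intros Hh Hd H1 H2. apply NNPP; intro Hne.
  destruct (Hh _ _ Hne) as [U [V [HU [HV [HUy [HVy Hdis]]]]]].
  destruct (eventually_and le (fun i => U (s i)) (fun i => V (s i)) Hd (H1 U HU HUy) (H2 V HV HVy)) as [k Hk].
  destruct Hd as [_ [Hrefl _]].
  destruct (Hk k (Hrefl k)) as [a b]. exact (Hdis (s k) (conj a b)).
Qed.

Lemma cluster {D X} (le : D -> D -> Prop) (tX : Topology X) (s : D -> X) :
  compact tX -> directed le ->
  exists w, forall i U, is_open tX U -> U w -> exists j, le i j /\ U (s j).
Proof.
  intros Hc Hd. apply NNPP; intro Hn.
  set (F := fun U : X -> Prop => is_open tX U /\ exists i, forall j, le i j -> ~ U (s j)).
  destruct (Hc F) as [l [Hl Hcov]].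
  - intros U [HU _]; exact HU.
  - intros x. apply NNPP; intro Hx. apply Hn. exists x. intros i U HU HUx.
    apply NNPP; intro Hj. apply Hx. exists U. split; [|exact HUx]. split; [exact HU|].
    exists i. intros j Hij HUj. apply Hj. exists j; auto.
  - destruct (eventually_list le l (fun U i => ~ U (s i)) Hd) as [k Hk].
    + intros U HU. destruct (Hl U HU) as [_ [i Hi]]. exists i. exact Hi.
    + destruct (Hcov (s k)) as [U [HU HUs]].
      destruct Hd as [_ [Hrefl _]]. exact (Hk k (Hrefl k) U HU HUs).
Qed.

Lemma ginv_ginv (T : TopGroup) (g : T) : ginv T (ginv T g) = g.
Proof.
  rewrite <- (gmul1r T (ginv T (ginv T g))).
  rewrite <- (gmulVl T g). rewrite gmulA. rewrite gmulVl. apply gmul1l.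
Qed.

Lemma net_ext {D X} le (tX : Topology X) (s s' : D -> X) y :
  (forall i, s i = s' i) -> net_converges le tX s y -> net_converges le tX s' y.
Proof. intros He H U HU Hy. destruct (H U HU Hy) as [i0 Hi]. exists i0. intros i Hi'. rewrite <- He. auto. Qed.

Lemma key2 (T : TopGroup) {X} (tX : Topology X) act
  (haa : forall x, almost_automorphic T tX act x)
  {D} (le : D -> D -> Prop) (t : D -> T) p :
  directed le -> (forall x, net_converges le tX (fun i => act (t i) x) (p x)) ->
  forall x, net_converges le tX (fun i => act (ginv T (t i)) (p x)) x.
Proof. intros Hd Hc x. apply (haa x D le t (p x) Hd (Hc x)). Qed.

Lemma key1 (T : TopGroup) {X} (tX : Topology X) act (hhaus : hausdorff tX)
  (haa : forall x, almost_automorphic T tX act x)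
  {D} (le : D -> D -> Prop) (t : D -> T) p z w :
  directed le -> (forall x, net_converges le tX (fun i => act (t i) x) (p x)) ->
  net_converges le tX (fun i => act (ginv T (t i)) z) w -> p w = z.
Proof.
  intros Hd Hc Hw.
  pose proof (haa z D le (fun i => ginv T (t i)) w Hd Hw) as H.
  apply (net_ext le tX _ (fun i => act (t i) w)) in H; [| intro i; simpl; rewrite ginv_ginv; reflexivity].
  exact (limit_unique le tX _ _ _ hhaus Hd (Hc w) H).
Qed.

Record sidx {D X : Type} (le : D -> D -> Prop) (tX : Topology X) (s : D -> X) (w : X) := SIdx {
  si_i : D; si_N : X -> Prop; si_j : D;
  si_open : is_open tX si_N; si_w : si_N w; si_le : le si_i si_j; si_in : si_N (s si_j) }.
Arguments si_i {D X le tX s w}.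
Arguments si_N {D X le tX s w}.
Arguments si_j {D X le tX s w}.
Arguments si_open {D X le tX s w}.
Arguments si_w {D X le tX s w}.
Arguments si_le {D X le tX s w}.
Arguments si_in {D X le tX s w}.

Definition sle {D X} (le : D -> D -> Prop) (tX : Topology X) s w (a b : sidx le tX s w) : Prop :=
  le (si_i a) (si_i b) /\ forall y, si_N b y -> si_N a y.

Lemma subnet {D X} (le : D -> D -> Prop) (tX : Topology X) (s : D -> X) w :
  directed le -> (forall i U, is_open tX U -> U w -> exists j, le i j /\ U (s j)) ->
  directed (sle le tX s w) /\
  net_converges (sle le tX s w) tX (fun a => s (si_j a)) w /\
  (forall P : D -> Prop, (exists i0, forall i, le i0 i -> P i) ->
     exists a0, forall a, sle le tX s w a0 a -> P (si_j a)).
Proof.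
  intros Hd Hcl.
  destruct Hd as [[i0] [Hrefl [Htr Hub]]].
  pose (triv := fun i => @SIdx D X le tX s w i (fun _ => True) i (open_full tX) I (Hrefl i) I).
  split; [|split].
  - split; [|split; [|split]].
    + constructor. exact (triv i0).
    + intros a. split; auto.
    + intros a b c [H1 H2] [H3 H4]. split; eauto.
    + intros a b. destruct (Hub (si_i a) (si_i b)) as [k [Hak Hbk]].
      destruct (Hcl k (fun y => si_N a y /\ si_N b y)) as [j [Hkj Hj]].
      * apply open_inter; [apply si_open | apply si_open].
      * split; apply si_w.
      * assert (Ho : is_open tX (fun y => si_N a y /\ si_N b y)) by (apply open_inter; apply si_open).
        exists (@SIdx D X le tX s w k _ j Ho (conj (si_w a) (si_w b)) Hkj Hj).
        split; split; simpl; auto; intros y [? ?]; auto.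
  - intros U HU HUw. destruct (Hcl i0 U HU HUw) as [j [Hj HUj]].
    exists (@SIdx D X le tX s w i0 U j HU HUw Hj HUj).
    intros a [_ Ha]. apply Ha. apply si_in.
  - intros P [k Hk]. exists (triv k). intros a [Ha _]. apply Hk.
    eapply Htr; [exact Ha | apply si_le].
Qed.

Lemma cluster_key (T : TopGroup) {X} (tX : Topology X) act (hhaus : hausdorff tX)
  (haa : forall x, almost_automorphic T tX act x)
  {D} (le : D -> D -> Prop) (t : D -> T) p z w :
  directed le -> (forall x, net_converges le tX (fun i => act (t i) x) (p x)) ->
  (forall i U, is_open tX U -> U w -> exists j, le i j /\ U (act (ginv T (t j)) z)) ->
  p w = z.
Proof.
  intros Hd Hc Hcl.
  destruct (subnet le tX (fun i => act (ginv T (t i)) z) w Hd Hcl) as [Hd' [Hconv Hev]].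
  apply (key1 T tX act hhaus haa (sle le tX _ w) (fun a => t (si_j a)) p z w Hd').
  - intros x U HU HUx. destruct (Hc x U HU HUx) as [i0 Hi0].
    apply (Hev (fun i => U (act (t i) x))). exists i0; exact Hi0.
  - exact Hconv.
Qed.

Definition nbidx {X} (tX : Topology X) (p : X -> X) := { l : list (X * (X -> Prop)) | nbl tX l p }.
Definition nble {X} (tX : Topology X) p (a b : nbidx tX p) := incl (proj1_sig a) (proj1_sig b).

Lemma nble_directed {X} (tX : Topology X) p : directed (nble tX p).
Proof.
  split; [|split; [|split]].
  - constructor. exists nil. intros xu [].
  - intros i. unfold nble. apply incl_refl.
  - intros i j k. unfold nble. apply incl_tran.
  - intros [l1 H1] [l2 H2].
    assert (H : nbl tX (l1 ++ l2) p). { intros xu Hin. apply in_app_or in Hin as [Hin|Hin]; auto. }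
    exists (exist _ (l1 ++ l2) H). unfold nble; simpl. split; [apply incl_appl | apply incl_appr]; apply incl_refl.
Qed.

Lemma nb_net (T : TopGroup) {X} (tX : Topology X) act p (Q : T -> Prop) :
  (forall m, nbl tX m p -> exists g, basic m (act g) /\ Q g) ->
  exists t : nbidx tX p -> T, (forall x, net_converges (nble tX p) tX (fun i => act (t i) x) (p x)) /\ forall i, Q (t i).
Proof.
  intros H.
  exists (fun i => proj1_sig (constructive_indefinite_description _ (H (proj1_sig i) (proj2_sig i)))).
  split.
  - intros x U HU HUx.
    assert (Hn : nbl tX [(x, U)] p). { intros xu [<-|[]]; simpl; auto. }
    exists (exist _ [(x,U)] Hn). intros i Hi.
    pose proof (proj2_sig (constructive_indefinite_description _ (H (proj1_sig i) (proj2_sig i)))) as [Hg _].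
    apply (Hg (x,U)). apply Hi. simpl; auto.
  - intros i. exact (proj2 (proj2_sig (constructive_indefinite_description _ (H (proj1_sig i) (proj2_sig i))))).
Qed.

Lemma net_to (T : TopGroup) {X} (tX : Topology X) act p :
  enveloping T tX act p ->
  exists t : nbidx tX p -> T, (forall x, net_converges (nble tX p) tX (fun i => act (t i) x) (p x)).
Proof.
  intros HE. destruct (nb_net T tX act p (fun _ => True)) as [t [Ht _]].
  - intros m Hm. destruct (E_basic T tX act p m HE Hm) as [g Hg]. exists g; auto.
  - exists t; exact Ht.
Qed.

Lemma approx (T : TopGroup) {X} (tX : Topology X) act
  (haa : forall x, almost_automorphic T tX act x) q l1 l2 :
  enveloping T tX act q -> nbl tX l1 q ->
  (forall xu, In xu l2 -> is_open tX (snd xu) /\ snd xu (fst xu)) ->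
  exists g, basic l1 (act g) /\ forall xu, In xu l2 -> snd xu (act (ginv T g) (q (fst xu))).
Proof.
  intros HE H1 H2.
  destruct (net_to T tX act q HE) as [t Hc].
  pose proof (nble_directed tX q) as Hd.
  assert (E1 : exists i0, forall i, nble tX q i0 i -> forall xu, In xu l1 -> snd xu (act (t i) (fst xu))).
  { apply (eventually_list _ l1 (fun xu i => snd xu (act (t i) (fst xu))) Hd).
    intros xu Hin. destruct (H1 xu Hin) as [Ho Hx]. exact (Hc (fst xu) (snd xu) Ho Hx). }
  assert (E2 : exists i0, forall i, nble tX q i0 i -> forall xu, In xu l2 -> snd xu (act (ginv T (t i)) (q (fst xu)))).
  { apply (eventually_list _ l2 (fun xu i => snd xu (act (ginv T (t i)) (q (fst xu)))) Hd).
    intros xu Hin. destruct (H2 xu Hin) as [Ho Hx].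
    exact (key2 T tX act haa _ t q Hd Hc (fst xu) (snd xu) Ho Hx). }
  destruct (eventually_and _ _ _ Hd E1 E2) as [k Hk].
  exists (t k). destruct (Hk k (incl_refl _)) as [A B]. split; [intros xu Hin; apply A; auto | exact B].
Qed.

Lemma regular {X} (tX : Topology X) x U :
  compact tX -> hausdorff tX -> is_open tX U -> U x ->
  exists U', is_open tX U' /\ U' x /\
    forall y, ~ U y -> exists N, is_open tX N /\ N y /\ forall y', N y' -> ~ U' y'.
Proof.
  intros Hc Hh HU HUx.
  set (F := fun N : X -> Prop => is_open tX N /\
     (N = U \/ exists A, is_open tX A /\ A x /\ forall y', N y' -> ~ A y')).
  destruct (Hc F) as [l [Hl Hcov]].
  - intros N [HN _]; exact HN.
  - intros y. destruct (classic (U y)) as [Hy|Hy].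
    + exists U. split; auto. split; auto.
    + assert (Hne : x <> y) by (intro; subst; auto).
      destruct (Hh x y Hne) as [A [B [HA [HB [HAx [HBy Hdis]]]]]].
      exists B. split; auto. split; auto. right. exists A. split; auto. split; auto.
      intros y' HB' HA'. exact (Hdis y' (conj HA' HB')).
  - assert (Hind : forall l0, (forall N, In N l0 -> F N) ->
       exists U', is_open tX U' /\ U' x /\ forall N, In N l0 -> N = U \/ forall y', N y' -> ~ U' y').
    { induction l0 as [|N l0 IH]; intros H.
      - exists (fun _ => True). split; [apply open_full|]. split; [exact I| intros N []].
      - destruct IH as [U' [HU' [HU'x HU'l]]]. { intros; apply H; simpl; auto. }
        destruct (H N (or_introl eq_refl)) as [_ [HNU | [A [HA [HAx HAN]]]]].
        + exists U'. split; auto. split; auto. intros N' [<-|Hin]; auto.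
        + exists (fun y => A y /\ U' y). split; [apply open_inter; auto|]. split; auto.
          intros N' [<-|Hin].
          * right. intros y' HN' [HA' _]. exact (HAN y' HN' HA').
          * destruct (HU'l N' Hin) as [?|Hd]; auto. right. intros y' HN' [_ HU''].
            exact (Hd y' HN' HU''). }
    destruct (Hind l Hl) as [U' [HU' [HU'x HU'l]]].
    exists U'. split; auto. split; auto.
    intros y Hy. destruct (Hcov y) as [N [Hin HNy]].
    exists N. split; [apply (Hl N Hin)|]. split; auto.
    destruct (HU'l N Hin) as [Heq|Hd]; auto. subst N. contradiction.
Qed.

Lemma cont_list (T : TopGroup) {X} (tX : Topology X) act g q :
  jointly_continuous (gtop T) tX tX act ->
  forall l, (forall xu, In xu l -> is_open tX (snd xu) /\ snd xu (act g (q (fst xu)))) ->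
  exists l2, nbl tX l2 q /\ forall f, basic l2 f -> forall xu, In xu l -> snd xu (act g (f (fst xu))).
Proof.
  intros Hj. induction l as [|[x U] l IH]; intros H.
  - exists nil. split; [intros xu []|]. intros f _ xu [].
  - destruct IH as [l2 [H2a H2b]]. { intros xu Hin; apply H; simpl; auto. }
    destruct (H (x,U) (or_introl eq_refl)) as [HU HUx]. simpl in HU, HUx.
    destruct (Hj g (q x) U HU HUx) as [A [V [_ [HV [HAg [HVq Himp]]]]]].
    exists ((x, V) :: l2). split.
    + intros xu [<-|Hin]; [simpl; auto | apply H2a; auto].
    + intros f Hf xu [<-|Hin].
      * simpl. apply Himp; auto. apply (Hf (x,V)); simpl; auto.
      * apply H2b; auto. intros xu' Hin'; apply Hf; simpl; auto.
Qed.

Theorem mainTheorem3 (T : TopGroup) (X : Type) (tX : Topology X) (act : T -> X -> X)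
  (hcomp : compact tX) (hhaus : hausdorff tX)
  (hact : continuous_action T tX act)
  (haa : forall x : X, almost_automorphic T tX act x) :
  let E := enveloping T tX act in
  (* E(X,T) is a group under composition, with identity id_X *)
  (forall p q, E p -> E q -> E (fun x => p (q x))) /\
  E (fun x => x) /\
  exists inv : (X -> X) -> (X -> X),
    (forall p, E p -> E (inv p) /\ forall x, p (inv p x) = x /\ inv p (p x) = x) /\
    (* inversion is continuous on E (subspace of the product topology on X^X) *)
    (forall p W, E p -> pw_open tX W -> W (inv p) ->
       exists V, pw_open tX V /\ V p /\ forall q, E q -> V q -> W (inv q)) /\
    (* and maps E onto E *)
    (forall q, E q -> exists p, E p /\ inv p = q).
Proof.
  intros E.
  destruct hact as [hact1 [hact2 hactc]].
  assert (Hinj : forall p, E p -> forall x x', p x = p x' -> x = x').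
  { intros p Hp x x' Hxx'.
    destruct (net_to T tX act p Hp) as [t Hc].
    pose proof (key2 T tX act haa _ t p (nble_directed tX p) Hc) as K.
    pose proof (K x) as K1. pose proof (K x') as K2. rewrite Hxx' in K1.
    exact (limit_unique _ tX _ _ _ hhaus (nble_directed tX p) K1 K2). }
  assert (Hsurj : forall p, E p -> forall z, exists w, p w = z).
  { intros p Hp z.
    destruct (net_to T tX act p Hp) as [t Hc].
    destruct (cluster (nble tX p) tX (fun i => act (ginv T (t i)) z) hcomp (nble_directed tX p)) as [w Hw].
    exists w. exact (cluster_key T tX act hhaus haa _ t p z w (nble_directed tX p) Hc Hw). }
  set (inv := fun (p : X -> X) (z : X) => epsilon (inhabits z) (fun w => p w = z)).
  assert (Hinv1 : forall p, E p -> forall z, p (inv p z) = z).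
  { intros p Hp z. unfold inv. apply epsilon_spec. apply Hsurj; auto. }
  assert (Hinv2 : forall p, E p -> forall x, inv p (p x) = x).
  { intros p Hp x. apply (Hinj p Hp). apply Hinv1; auto. }
  assert (HEinv : forall p, E p -> E (inv p)).
  { intros p Hp W HW HWi.
    destruct (HW _ HWi) as [l [Hl Hsub]].
    destruct (approx T tX act haa p [] (map (fun xu => (inv p (fst xu), snd xu)) l) Hp) as [g [_ Hg]].
    - intros xu [].
    - intros xu Hin. apply in_map_iff in Hin as [xu' [<- Hin]]. simpl. apply Hl; auto.
    - exists (act (ginv T g)). split; [exists (ginv T g); intro; reflexivity|].
      apply Hsub. intros xu Hin.
      pose proof (Hg (inv p (fst xu), snd xu)) as H. simpl in H. rewrite (Hinv1 p Hp) in H.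
      apply H. apply in_map_iff. exists xu; auto. }
  split.
  { intros p q Hp Hq W HW HWpq.
    destruct (HW _ HWpq) as [l [Hl Hsub]].
    assert (Hn1 : nbl tX (map (fun xu => (q (fst xu), snd xu)) l) p).
    { intros xu Hin. apply in_map_iff in Hin as [xu' [<- Hin]]. simpl. apply Hl; auto. }
    destruct (E_basic T tX act p _ Hp Hn1) as [g Hg].
    destruct (cont_list T tX act g q hactc l) as [l2 [H2a H2b]].
    { intros xu Hin. split; [apply Hl; auto|].
      apply (Hg (q (fst xu), snd xu)). apply in_map_iff. exists xu; auto. }
    destruct (E_basic T tX act q l2 Hq H2a) as [h Hh].
    exists (act (gmul T g h)). split; [exists (gmul T g h); intro; reflexivity|].
    apply Hsub. intros xu Hin. rewrite hact2. apply H2b; auto. }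
  split.
  { intros W HW HWid. exists (act (gone T)). split; [exists (gone T); intro; reflexivity|].
    replace (act (gone T)) with (fun x : X => x); auto.
    apply functional_extensionality; intro x; rewrite hact1; reflexivity. }
  exists inv. split; [|split].
  - intros p Hp. split; [apply HEinv; auto|]. intros x; split; [apply Hinv1 | apply Hinv2]; auto.
  - intros p W Hp HW HWi.
    destruct (HW _ HWi) as [l [Hl Hsub]].
    assert (Hone : forall z U, is_open tX U -> U (inv p z) ->
              exists m, nbl tX m p /\ forall q, E q -> basic m q -> U (inv q z)).
    { intros z U HU HUz.
      destruct (regular tX (inv p z) U hcomp hhaus HU HUz) as [U' [HU' [HU'z Hsep]]].
      apply NNPP; intro Hneg.
      assert (Hall : forall m, nbl tX m p -> exists g, basic m (act g) /\ ~ U' (act (ginv T g) z)).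
      { intros m Hm. apply NNPP; intro Hno. apply Hneg. exists m. split; auto.
        intros q Hq Hbq. apply NNPP; intro HnU.
        destruct (Hsep _ HnU) as [N [HN [HNq HNdis]]].
        destruct (approx T tX act haa q m [(inv q z, N)] Hq) as [g [Hg1 Hg2]].
        - intros xu Hin. split; [apply (Hm xu Hin) | apply Hbq; auto].
        - intros xu [<-|[]]; simpl; auto.
        - apply Hno. exists g. split; auto. intro HU'g.
          pose proof (Hg2 (inv q z, N) (or_introl eq_refl)) as H. simpl in H.
          rewrite (Hinv1 q Hq) in H.
          exact (HNdis _ H HU'g). }
      destruct (nb_net T tX act p (fun g => ~ U' (act (ginv T g) z)) Hall) as [t [Hc HQ]].
      destruct (cluster (nble tX p) tX (fun i => act (ginv T (t i)) z) hcomp (nble_directed tX p)) as [w Hw].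
      assert (Hpw : p w = z) by exact (cluster_key T tX act hhaus haa _ t p z w (nble_directed tX p) Hc Hw).
      assert (Hwe : w = inv p z). { rewrite <- Hpw. symmetry. apply Hinv2; auto. }
      rewrite <- Hwe in HU'z.
      destruct (nble_directed tX p) as [[i0] _].
      destruct (Hw i0 U' HU' HU'z) as [j [_ Hj]]. exact (HQ j Hj). }
    assert (Hm : forall l0, (forall xu, In xu l0 -> is_open tX (snd xu) /\ snd xu (inv p (fst xu))) ->
              exists m, nbl tX m p /\ forall q, E q -> basic m q -> forall xu, In xu l0 -> snd xu (inv q (fst xu))).
    { induction l0 as [|[z U] l0 IH]; intros H.
      - exists nil. split; [intros xu []|]. intros q _ _ xu [].
      - destruct IH as [m1 [Hm1 Hm1']]. { intros; apply H; simpl; auto. }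
        destruct (H (z,U) (or_introl eq_refl)) as [HU HUz]. simpl in HU, HUz.
        destruct (Hone z U HU HUz) as [m2 [Hm2 Hm2']].
        exists (m1 ++ m2). split.
        + intros xu Hin; apply in_app_or in Hin as [Hin|Hin]; auto.
        + intros q Hq Hb xu [<-|Hin].
          * simpl. apply Hm2'; auto. intros xu' Hin'. apply Hb. apply in_or_app; auto.
          * apply Hm1'; auto. intros xu' Hin'. apply Hb. apply in_or_app; auto. }
    destruct (Hm l Hl) as [m [Hm1 Hm2]].
    exists (basic m). split; [apply basic_open; intros; apply Hm1; auto|].
    split; [intros xu Hin; apply Hm1; auto|].
    intros q Hq Hbq. apply Hsub. intros xu Hin. apply Hm2; auto.
  - intros q Hq. exists (inv q). split; [apply HEinv; auto|].
    apply functional_extensionality; intro z.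
    apply (Hinj (inv q) (HEinv q Hq)). rewrite (Hinv1 (inv q) (HEinv q Hq)).
    symmetry; apply Hinv2; auto.
Qed.
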